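(* For every integer $n\ge 3$, $$Kf(M_n)=\frac{n^{3}-n}{6}+\frac{n^{2}}{\sqrt{3}}\cdot\frac{p^{n}-q^{n}}{p^{n}+q^{n}+2}.$$
   Context: For an integer $n\ge 3$, the Möbius polyomino network $M_n$ is the graph with vertex set $\{1,\dots,n\}\cup\{1',\dots,n'\}$ whose edges are $\{i,i+1\}$ and $\{i',(i+1)'\}$ for $1\le i\le n-1$, $\{i,i'\}$ for $1\le i\le n$, and the two edges $\{1,n'\}$ and $\{1',n\}$. It has $2n$ vertices and $3n$ edges, and every vertex has degree $3$. $p=2+\sqrt3$, $q=2-\sqrt3$. The Kirchhoff index of a connected graph $G$ is $Kf(G)=\sum_{i<j}r_{ij}$, where $r_{ij}$ is the resistance distance between vertices $i$ and $j$; equivalently $Kf(G)=N\sum_{k=2}^{N}1/\mu_k$, where $N=|V(G)|$ and $0=\mu_1<\mu_2\le\dots\le\mu_N$ are the Laplacian eigenvalues of $G$. *)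

(* Defs.v *)
From HB Require Import structures.
From mathcomp Require Import all_boot all_order all_algebra.
Set Implicit Arguments. Unset Strict Implicit. Unset Printing Implicit Defensive.
Import Order.TTheory GRing.Theory Num.Theory.
Local Open Scope ring_scope.

(* A (simple) graph on the vertex set 'I_N is given by a symmetric,
   irreflexive boolean adjacency relation. *)

Definition laplacian (R : nzRingType) (N : nat) (adj : 'I_N -> 'I_N -> bool)
  : 'M[R]_N :=
  \matrix_(i, j) (if i == j then (\sum_(k < N) (adj i k : nat))%:R
                  else - (adj i j : nat)%:R).

(* Resistance distance between i and j: inject a unit current at i and
   extract it at j; r_ij is the resulting potential difference x_i - x_j,
   where x solves x L = e_i - e_j (L symmetric; x is a particular solution
   obtained with pinvmx; for a connected graph the difference x_i - x_j
   does not depend on the chosen solution). *)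
Definition resistance (R : fieldType) (N : nat) (adj : 'I_N -> 'I_N -> bool)
  (i j : 'I_N) : R :=
  let u : 'rV[R]_N := delta_mx 0 i - delta_mx 0 j in
  let x := u *m pinvmx (laplacian R adj) in
  x 0 i - x 0 j.

Definition kirchhoff (R : fieldType) (N : nat) (adj : 'I_N -> 'I_N -> bool) : R :=
  \sum_(i < N) \sum_(j < N | (i < j)%N) resistance R adj i j.

(* Möbius polyomino network M_n on 2n vertices.  Encoding (0-based):
   vertex k (1 <= k <= n) is index k-1, vertex k' is index n+k-1. *)
Definition mobius_edge (n a b : nat) : bool :=
  [|| [&& (a < n)%N, (b < n)%N & b == a.+1]
    , [&& (n <= a)%N, (b < 2 * n)%N & b == a.+1]
    , [&& (a < n)%N & b == a + n]
    , (a == 0%N) && (b == (2 * n).-1)                   (* {1, n'} *)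
    | (a == n) && (b == n.-1) ].                        (* {1', n} *)

Definition mobius_adj (n : nat) (x y : 'I_(2 * n)) : bool :=
  mobius_edge n x y || mobius_edge n y x.
Arguments mobius_adj n x y : clear implicits.

(* Main.v *)
Require Import Defs.
From HB Require Import structures.
From mathcomp Require Import all_boot all_order all_algebra zify ring lra.
Set Implicit Arguments. Unset Strict Implicit. Unset Printing Implicit Defensive.
Import Order.TTheory GRing.Theory Num.Theory.
Definition nx (n a : nat) : nat := if a.+1 == 2*n then 0 else a.+1.
Definition pv (n a : nat) : nat := if a == 0 then (2*n).-1 else a.-1.
Definition op (n a : nat) : nat := if (a < n)%N then a + n else a - n.
Lemma edge1 (n a b : nat) : (3 <= n)%N -> (a < 2*n)%N -> (b < 2 * n)%N ->
  mobius_edge n a b -> [|| b == nx n a, b == pv n a | b == op n a].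
Proof. move=> h1 h2 h3; rewrite /mobius_edge /nx /pv /op.
case/orP => [|/orP [|/orP [|/orP []]]].
- case/and3P => ? ? ?; case: ifP; case: ifP; case: ifP; lia.
- case/and3P => ? ? ?; case: ifP; case: ifP; case: ifP; lia.
- case/andP => ? ?; case: ifP; case: ifP; case: ifP; lia.
- case/andP => ? ?; case: ifP; case: ifP; case: ifP; lia.
- case/andP => ? ?; case: ifP; case: ifP; case: ifP; lia.
Qed.
Ltac pk k := match k with
 | 1 => apply/orP; left
 | 2 => apply/orP; right; apply/orP; left
 | 3 => apply/orP; right; apply/orP; right; apply/orP; left
 | 4 => apply/orP; right; apply/orP; right; apply/orP; right; apply/orP; left
 | 5 => apply/orP; right; apply/orP; right; apply/orP; right; apply/orP; right
 end.
Ltac fin := repeat (apply/andP; split); lia.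
Lemma edge2 (n a b : nat) : (3 <= n)%N -> (a < 2*n)%N -> (b < 2 * n)%N ->
  [|| b == nx n a, b == pv n a | b == op n a] -> mobius_edge n a b || mobius_edge n b a.
Proof. move=> h1 h2 h3; rewrite /mobius_edge /nx /pv /op.
case/orP => [|/orP []]; case: ifP => h4 /eqP ->.
- apply/orP; right; pk 4; fin.
- case: (ltngtP a n.-1) => h5.
  + apply/orP; left; pk 1; fin.
  + apply/orP; left; pk 2; fin.
  + apply/orP; right; pk 5; fin.
- apply/orP; left; pk 4; fin.
- case: (ltngtP a n) => h5.
  + apply/orP; right; pk 1; fin.
  + apply/orP; right; pk 2; fin.
  + apply/orP; left; pk 5; fin.
- apply/orP; left; pk 3; fin.
- apply/orP; right; pk 3; fin.
Qed.

Definition Dd (n a b : nat) : nat := if (a <= b)%N then b - a else b + 2*n - a.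

Section Comb.
Variable n : nat.
Hypothesis hn : (3 <= n)%N.
Local Notation N := (2 * n)%N.

Lemma adj_char (a b : nat) : (a < N)%N -> (b < N)%N ->
  (mobius_edge n a b || mobius_edge n b a) = [|| b == nx n a, b == pv n a | b == op n a].
Proof. move=> ha hb; apply/idP/idP; last exact: edge2.
by case/orP => h; [apply: edge1 | ]; rewrite //; move: (edge1 hn hb ha h);
 rewrite /nx /pv /op; case: ifP; case: ifP; case: ifP; case: ifP; case: ifP; case: ifP; lia.
Qed.

Lemma nx_lt a : (a < N)%N -> (nx n a < N)%N. Proof. rewrite /nx; case: ifP; lia. Qed.
Lemma pv_lt a : (a < N)%N -> (pv n a < N)%N. Proof. rewrite /pv; case: ifP; lia. Qed.
Lemma op_lt a : (a < N)%N -> (op n a < N)%N. Proof. rewrite /op; case: ifP; lia. Qed.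
Lemma nx_pv a : (a < N)%N -> nx n a != pv n a. Proof. rewrite /nx /pv; case: ifP; case: ifP; lia. Qed.
Lemma nx_op a : (a < N)%N -> nx n a != op n a. Proof. rewrite /nx /op; case: ifP; case: ifP; lia. Qed.
Lemma pv_op a : (a < N)%N -> pv n a != op n a. Proof. rewrite /op /pv; case: ifP; case: ifP; lia. Qed.
Lemma nx_neq a : (a < N)%N -> a != nx n a. Proof. rewrite /nx; case: ifP; lia. Qed.
Lemma pv_neq a : (a < N)%N -> a != pv n a. Proof. rewrite /pv; case: ifP; lia. Qed.
Lemma op_neq a : (a < N)%N -> a != op n a. Proof. rewrite /op; case: ifP; lia. Qed.

Lemma Dd_lt a b : (a < N)%N -> (b < N)%N -> (Dd n a b < N)%N.
Proof. rewrite /Dd; case: ifP; lia. Qed.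
Lemma Dd_nx a b : (a < N)%N -> (b < N)%N -> Dd n a (nx n b) = nx n (Dd n a b).
Proof. rewrite /Dd /nx => ? ?; case: ifP; case: ifP; case: ifP; case: ifP; lia. Qed.
Lemma Dd_pv a b : (a < N)%N -> (b < N)%N -> Dd n a (pv n b) = pv n (Dd n a b).
Proof. rewrite /Dd /pv => ? ?; case: ifP; case: ifP; case: ifP; case: ifP; lia. Qed.
Lemma Dd_op a b : (a < N)%N -> (b < N)%N -> Dd n a (op n b) = op n (Dd n a b).
Proof. rewrite /Dd /op => ? ?; case: ifP; case: ifP; case: ifP; case: ifP; lia. Qed.
Lemma Dd_eq0 a b : (a < N)%N -> (b < N)%N -> (Dd n a b == 0) = (a == b).
Proof. rewrite /Dd => ? ?; case: ifP; lia. Qed.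
Lemma Dd_inj a b c : (a < N)%N -> (b < N)%N -> (c < N)%N -> Dd n a b = Dd n a c -> b = c.
Proof. rewrite /Dd => ? ? ?; case: ifP; case: ifP; lia. Qed.
Lemma Dd_inj2 a b c : (a < N)%N -> (b < N)%N -> (c < N)%N -> Dd n b a = Dd n c a -> b = c.
Proof. rewrite /Dd => ? ? ?; case: ifP; case: ifP; lia. Qed.
Lemma Dd_pvS a b : (a < N)%N -> (b < N)%N -> (0 < Dd n a b)%N ->
   Dd n a (pv n b) = (Dd n a b).-1 /\ nx n (pv n b) = b.
Proof. move=> ? ?; rewrite /pv; case: eqP => [->|?];
  rewrite /Dd /nx; repeat (case: ifP); lia. Qed.
End Comb.

Local Open Scope ring_scope.

Section Lap.
Variables (R : rcfType) (n : nat).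
Hypothesis hn : (3 <= n)%N.
Local Notation N := (2*n)%N.
Local Notation L := (laplacian R (mobius_adj n)).

Definition nxo (b : 'I_N) : 'I_N := Ordinal (nx_lt hn (ltn_ord b)).
Definition pvo (b : 'I_N) : 'I_N := Ordinal (pv_lt hn (ltn_ord b)).
Definition opo (b : 'I_N) : 'I_N := Ordinal (op_lt hn (ltn_ord b)).

Lemma adj_nat (b k : 'I_N) : (mobius_adj n b k : nat) = ((k == nxo b) + (k == pvo b) + (k == opo b))%N.
Proof.
rewrite /mobius_adj (adj_char hn (ltn_ord b) (ltn_ord k)) -!val_eqE /=.
have := nx_pv hn (ltn_ord b); have := nx_op hn (ltn_ord b); have := pv_op hn (ltn_ord b).
case: eqP => h1; case: eqP => h2; case: eqP => h3 => /=; lia.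
Qed.

Lemma sum_delta (F : 'I_N -> R) (c : 'I_N) : \sum_k (k == c)%:R * F k = F c.
Proof.
rewrite (bigD1 c) //= eqxx mul1r big1 ?addr0 // => k /negbTE ->; by rewrite mul0r.
Qed.

Lemma sum_adj (F : 'I_N -> R) (b : 'I_N) :
  \sum_k (mobius_adj n b k : nat)%:R * F k = F (nxo b) + F (pvo b) + F (opo b).
Proof.
under eq_bigr => k _ do rewrite adj_nat !natrD !mulrDl.
by rewrite !big_split /= !sum_delta.
Qed.

Lemma adj_irr (b : 'I_N) : mobius_adj n b b = false.
Proof.
apply/negbTE/negP => h; move: (adj_nat b b); rewrite h -!val_eqE /=.
have := nx_neq hn (ltn_ord b); have := pv_neq hn (ltn_ord b); have := op_neq hn (ltn_ord b).
lia.
Qed.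

Lemma adj_sym (a b : 'I_N) : mobius_adj n a b = mobius_adj n b a.
Proof. by rewrite /mobius_adj orbC. Qed.

Lemma Lentry (k b : 'I_N) : L k b = (k == b)%:R * 3 - (mobius_adj n b k : nat)%:R.
Proof.
rewrite /laplacian mxE; case: eqP => [->|hkb].
  rewrite adj_irr natr_sum mul1r subr0.
  rewrite (eq_bigr (fun j => (mobius_adj n b j : nat)%:R * 1)); last by move=> j _; rewrite mulr1.
  rewrite (sum_adj (fun _ => 1)); ring.
by rewrite mul0r sub0r adj_sym.
Qed.

Lemma rowL (y : 'rV[R]_N) (b : 'I_N) :
  (y *m L) 0 b = 3 * y 0 b - (y 0 (nxo b) + y 0 (pvo b) + y 0 (opo b)).
Proof.
rewrite mxE.
under eq_bigr => k _ do rewrite Lentry mulrBr.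
rewrite sumrB -(sum_adj (y 0) b).
congr (_ - _).
  rewrite -(sum_delta (fun k => 3 * y 0 k) b); apply: eq_bigr => k _ /=; ring.
by apply: eq_bigr => k _; rewrite mulrC.
Qed.
End Lap.

Section Ker.
Variables (R : rcfType) (n : nat).
Hypothesis hn : (3 <= n)%N.
Local Notation N := (2*n)%N.
Local Notation L := (laplacian R (mobius_adj n)).

Lemma ker_const (y : 'rV[R]_N) : y *m L = 0 -> forall s t, y 0 s = y 0 t.
Proof.
move=> hy.
have hN : (0 < N)%N by lia.
pose i0 : 'I_N := Ordinal hN.
case: (@arg_maxP _ _ 'I_N i0 predT (fun k => y 0 k) isT) => m _ hm.
have hm' : forall k, y 0 k <= y 0 m by move=> k; exact: hm.
have step : forall b, y 0 b = y 0 m -> y 0 (nxo hn b) = y 0 m.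
  move=> b hb; have := rowL hn y b; rewrite hy mxE => h0.
  have := hm' (nxo hn b); have := hm' (pvo hn b); have := hm' (opo hn b). lra.
suff all : forall d (t : 'I_N), Dd n m t = d -> y 0 t = y 0 m.
  by move=> s t; rewrite (all _ s erefl) (all _ t erefl).
elim=> [|d IH] t ht.
  by have := Dd_eq0 hn (ltn_ord m) (ltn_ord t); rewrite ht eqxx => /esym/eqP/val_inj ->.
have [h1 h2] := Dd_pvS hn (ltn_ord m) (ltn_ord t) (ltac:(rewrite ht; done)).
have -> : t = nxo hn (pvo hn t) by apply: val_inj; rewrite /= h2.
apply: step; apply: IH; by rewrite /= h1 ht.
Qed.
End Ker.

Section Fun.
Variables (R : rcfType) (n : nat).
Hypothesis hn : (3 <= n)%N.
Local Notation s := (Num.sqrt (3 : R)).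
Local Notation q := (2 - Num.sqrt (3 : R)).

Lemma s2 : s * s = 3.
Proof. by rewrite -expr2 sqr_sqrtr // ler0n. Qed.
Lemma s_gt0 : 0 < s.
Proof. by rewrite sqrtr_gt0 ltr0n. Qed.
Lemma s_lt2 : s < 2.
Proof. have := s2; have := s_gt0; nra. Qed.
Lemma q_gt0 : 0 < q.
Proof. have := s_lt2; lra. Qed.

Lemma qrec a : q ^+ a.+2 = 4 * q ^+ a.+1 - q ^+ a.
Proof.
apply/eqP; rewrite -subr_eq0 !exprS.
have -> : q * (q * q ^+ a) - (4 * (q * q ^+ a) - q ^+ a) = q ^+ a * (s * s - 3) by ring.
by rewrite s2 subrr mulr0.
Qed.

Definition hh (e : nat) : R := - (e%:R * (n%:R - e%:R)) * (n%:R)^-1 / 2.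
Definition Cc : R := (2 * s * (1 + q ^+ n))^-1.
Definition kk (e : nat) : R := (q ^+ e - q ^+ (n - e)) * Cc.

Lemma hh0 : hh 0 = 0. Proof. rewrite /hh; ring. Qed.
Lemma hhn : hh n = 0. Proof. rewrite /hh; ring. Qed.
Lemma kkn : kk n = - kk 0. Proof. rewrite /kk subnn subn0; ring. Qed.

Lemma n_neq0 : (n%:R : R) != 0. Proof. rewrite pnatr_eq0; lia. Qed.

Lemma HI e : (0 < e)%N -> 2 * hh e - hh e.-1 - hh e.+1 = - (n%:R)^-1.
Proof.
case: e => // e _ /=; rewrite /hh -[e.+2]addn2 -[e.+1]addn1 !natrD; field; exact: n_neq0.
Qed.

Lemma H0 : 2 * hh 0 - hh 1 - hh n.-1 = 1 - (n%:R)^-1.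
Proof.
have hn1 : (n.-1%:R : R) = n%:R - 1 by rewrite -subn1 natrB //; lia.
rewrite /hh hn1; field; exact: n_neq0.
Qed.

Lemma KI e : (0 < e)%N -> (e < n)%N -> 4 * kk e - kk e.-1 - kk e.+1 = 0.
Proof.
case: e => // e _ /= he; rewrite /kk.
have -> : (n - e = (n - e.+2).+2)%N by lia.
have -> : (n - e.+1 = (n - e.+2).+1)%N by lia.
rewrite !qrec; ring.
Qed.

Lemma K0 : 4 * kk 0 - kk 1 + kk n.-1 = 1.
Proof.
rewrite /kk /Cc subn0 subn1.
have -> : (n - n.-1 = 1)%N by lia.
have hnq : q ^+ n = q * q ^+ n.-1 by rewrite -exprS prednK //; lia.
rewrite hnq.
set Y := q ^+ n.-1.
have hY : 0 < Y by rewrite /Y exprn_gt0 // q_gt0.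
rewrite expr0 expr1.
have hD : 2 * s * (1 + q * Y) != 0.
  have hs := s_gt0; have hq := q_gt0; apply/lt0r_neq0.
  have hqY : 0 < q * Y by apply: mulr_gt0.
  apply: mulr_gt0; [apply: mulr_gt0 => // | ]; lra.
transitivity ((4 * (1 - q * Y) - (q - Y) + (Y - q)) / (2 * s * (1 + q * Y))); first (field; apply/andP; split; apply/lt0r_neq0; [have := mulr_gt0 q_gt0 hY; lra | exact: s_gt0]).
have -> : 4 * (1 - q * Y) - (q - Y) + (Y - q) = 2 * s * (1 + q * Y) + 2 * Y * (s * s - 3) by ring.
by rewrite s2 subrr mulr0 addr0 divff.
Qed.

Definition g (d : nat) : R :=
  if (d < n)%N then (hh d + kk d) / 2 else (hh (d - n) - kk (d - n)) / 2.

Lemma g_lo d : (d < n)%N -> g d = (hh d + kk d) / 2.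
Proof. by rewrite /g => ->. Qed.
Lemma g_hi d e : d = (e + n)%N -> g d = (hh e - kk e) / 2.
Proof. move=> ->; rewrite /g ifF ?addnK //; lia. Qed.


Lemma grec d : (d < 2 * n)%N ->
  3 * g d - g (nx n d) - g (pv n d) - g (op n d) = (d == 0%N)%:R - (n%:R)^-1 / 2.
Proof.
move=> hd.
have Hh0 := hh0; have Hhn := hhn; have Kn := kkn.
case: (ltngtP d n) => h.
- rewrite (g_lo h).
  have [->|d0] := eqVneq d 0%N.
  + rewrite (_ : nx n 0 = 1%N); last by rewrite /nx; case: ifP; lia.
    rewrite (_ : pv n 0 = n.-1 + n)%N; last by rewrite /pv /=; lia.
    rewrite (_ : op n 0 = 0 + n)%N; last by rewrite /op; case: ifP; lia.
    rewrite (g_lo (d:=1%N)); last lia.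
    rewrite (g_hi (e:=n.-1) erefl) (g_hi (e:=0%N) erefl) /=.
    have := H0; have := K0; lra.
  have [hdn|dn] := eqVneq d n.-1.
  + rewrite (_ : nx n d = 0 + n)%N; last by rewrite /nx; case: ifP; lia.
    rewrite (_ : pv n d = d.-1)%N; last by rewrite /pv; case: ifP; lia.
    rewrite (_ : op n d = d + n)%N; last by rewrite /op; case: ifP; lia.
    rewrite (g_lo (d:=d.-1)); last lia.
    rewrite (g_hi (e:=d) erefl) (g_hi (e:=0%N) erefl).
    have := HI (e:=d) (ltac:(lia)); have := KI (e:=d) (ltac:(lia)) (ltac:(lia)).
    rewrite (_ : d.+1 = n); last lia.
    rewrite Hhn Kn /=; lra.
  + rewrite (_ : nx n d = d.+1)%N; last by rewrite /nx; case: ifP; lia.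
    rewrite (_ : pv n d = d.-1)%N; last by rewrite /pv; case: ifP; lia.
    rewrite (_ : op n d = d + n)%N; last by rewrite /op; case: ifP; lia.
    rewrite (g_lo (d:=d.-1)); last lia.
    rewrite (g_lo (d:=d.+1)); last lia.
    rewrite (g_hi (e:=d) erefl).
    have := HI (e:=d) (ltac:(lia)); have := KI (e:=d) (ltac:(lia)) (ltac:(lia)).
    rewrite /=; lra.
- rewrite (g_hi (e := (d - n)%N)); last lia.
  rewrite (_ : (d == 0%N) = false); last lia.
  have [hdn|dn] := eqVneq (d - n)%N n.-1.
  + rewrite (_ : nx n d = 0%N); last by rewrite /nx; case: ifP; lia.
    rewrite (_ : pv n d = (d - n).-1 + n)%N; last by rewrite /pv; case: ifP; lia.
    rewrite (_ : op n d = d - n)%N; last by rewrite /op; case: ifP; lia.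
    rewrite (g_lo (d:=0%N)); last lia.
    rewrite (g_lo (d:=(d - n)%N)); last lia.
    rewrite (g_hi (e:=(d - n).-1) erefl).
    have := HI (e:=(d - n)%N) (ltac:(lia)); have := KI (e:=(d - n)%N) (ltac:(lia)) (ltac:(lia)).
    rewrite (_ : (d - n).+1 = n); last lia.
    rewrite Hhn Kn Hh0 /=; lra.
  + rewrite (_ : nx n d = (d - n).+1 + n)%N; last by rewrite /nx; case: ifP; lia.
    rewrite (_ : pv n d = (d - n).-1 + n)%N; last by rewrite /pv; case: ifP; lia.
    rewrite (_ : op n d = d - n)%N; last by rewrite /op; case: ifP; lia.
    rewrite (g_lo (d:=(d - n)%N)); last lia.
    rewrite (g_hi (e:=(d - n).-1) erefl) (g_hi (e:=(d - n).+1) erefl).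
    have := HI (e:=(d - n)%N) (ltac:(lia)); have := KI (e:=(d - n)%N) (ltac:(lia)) (ltac:(lia)).
    rewrite /=; lra.
- subst d.
  rewrite (g_hi (e:=0%N) erefl).
  rewrite (_ : nx n n = 1 + n)%N; last by rewrite /nx; case: ifP; lia.
  rewrite (_ : pv n n = n.-1)%N; last by rewrite /pv; case: ifP; lia.
  rewrite (_ : op n n = 0)%N; last by rewrite /op; case: ifP; lia.
  rewrite (g_hi (e:=1%N) erefl) (g_lo (d:=n.-1)); last lia.
  rewrite (g_lo (d:=0%N)); last lia.
  rewrite (_ : (n == 0%N) = false); last lia.
  have := H0; have := K0; rewrite /=; lra.
Qed.


Lemma sum_lin (m : nat) : \sum_(0 <= i < m) (i%:R : R) = m%:R * (m%:R - 1) / 2.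
Proof.
elim: m => [|m IH]; first by rewrite big_geq // mul0r mul0r.
rewrite big_nat_recr //= IH -[m.+1]addn1 natrD; by field.
Qed.

Lemma sum_sq (m : nat) : \sum_(0 <= i < m) (i%:R : R) ^+ 2 = m%:R * (m%:R - 1) * (2 * m%:R - 1) / 6.
Proof.
elim: m => [|m IH]; first by rewrite big_geq // !mul0r.
rewrite big_nat_recr //= IH -[m.+1]addn1 natrD; by field.
Qed.

Lemma sum_hh : \sum_(0 <= i < n) hh i = - (n%:R ^+ 2 - 1) / 12.
Proof.
rewrite (eq_bigr (fun i => (- (n%:R)^-1 / 2 * n%:R) * i%:R + ((n%:R)^-1 / 2) * (i%:R) ^+ 2)); last first.
  by move=> i _; rewrite /hh; ring.
rewrite big_split /= -!mulr_sumr sum_lin sum_sq; field; exact: n_neq0.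
Qed.

Lemma sum_g : \sum_(d < 2 * n) g d = - (n%:R ^+ 2 - 1) / 12.
Proof.
rewrite -(big_mkord xpredT g) (big_cat_nat (n:=n)) //=; last lia.
rewrite -{2}[n]add0n big_addn (_ : (2 * n - n = n)%N); last lia.
rewrite -big_split /= -sum_hh big_nat_cond [in RHS]big_nat_cond.
apply: eq_bigr => i /andP [/andP [_ hi] _].
rewrite (g_lo hi) (g_hi (e:=i) erefl); by field.
Qed.
End Fun.

Lemma sum_upper (R : rcfType) N (S : 'I_N -> 'I_N -> R) :
  (forall i j, S i j = S j i) -> (forall i, S i i = 0) ->
  \sum_(i < N) \sum_(j < N | (i < j)%N) S i j = (\sum_(i < N) \sum_(j < N) S i j) / 2.
Proof.
move=> Ssym Sd.
set A := \sum_(i < N) \sum_(j < N) (if (i < j)%N then S i j else 0).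
have e : \sum_(i < N) \sum_(j < N) S i j = A + \sum_(i < N) \sum_(j < N) (if (j < i)%N then S i j else 0).
  rewrite /A -big_split; apply: eq_bigr => i _; rewrite -big_split; apply: eq_bigr => j _ /=.
  case: (ltngtP i j) => h; rewrite ?addr0 ?add0r //.
  by have -> : j = i by apply: val_inj; rewrite /= h.
have e2 : \sum_(i < N) \sum_(j < N) (if (j < i)%N then S i j else 0) = A.
  rewrite exchange_big; apply: eq_bigr => i _; apply: eq_bigr => j _; by rewrite Ssym.
rewrite e e2.
have -> : \sum_(i < N) \sum_(j < N | (i < j)%N) S i j = A.
  by apply: eq_bigr => i _; rewrite big_mkcond.
by field.
Qed.

Section Main.
Variables (R : rcfType) (n : nat).
Hypothesis hn : (3 <= n)%N.
Local Notation N := (2*n)%N.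
Local Notation L := (laplacian R (mobius_adj n)).
Local Notation g := (g R n).

Lemma Dd_nn a : Dd n a a = 0%N.
Proof. by rewrite /Dd leqnn subnn. Qed.

Lemma res_eq (i j : 'I_N) : resistance R (mobius_adj n) i j =
  (g 0 - g (Dd n j i)) - (g (Dd n i j) - g 0).
Proof.
rewrite /resistance /=.
set u : 'rV[R]_N := delta_mx 0 i - delta_mx 0 j.
pose x' : 'rV[R]_N := \row_t (g (Dd n i t) - g (Dd n j t)).
have hx' : x' *m L = u.
  apply/rowP => b; rewrite rowL // !mxE /=.
  rewrite (Dd_nx hn (ltn_ord i) (ltn_ord b)) (Dd_pv hn (ltn_ord i) (ltn_ord b)) (Dd_op hn (ltn_ord i) (ltn_ord b)).
  rewrite (Dd_nx hn (ltn_ord j) (ltn_ord b)) (Dd_pv hn (ltn_ord j) (ltn_ord b)) (Dd_op hn (ltn_ord j) (ltn_ord b)).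
  have := grec R hn (Dd_lt hn (ltn_ord i) (ltn_ord b)); have := grec R hn (Dd_lt hn (ltn_ord j) (ltn_ord b)).
  rewrite !Dd_eq0 // (eq_sym b i) (eq_sym b j) -!val_eqE /=.
  lra.
have hu : (u <= L)%MS by rewrite -hx' submxMl.
have hx := mulmxKpV hu.
have hk : (u *m pinvmx L - x') *m L = 0 by rewrite mulmxBl hx hx' subrr.
have := ker_const hn hk i j; rewrite !mxE !Dd_nn.
lra.
Qed.

Lemma sum_re1 (i : 'I_N) : \sum_(j < N) g (Dd n i j) = \sum_(d < N) g d.
Proof.
have hinj : injective (fun j : 'I_N => Ordinal (Dd_lt hn (ltn_ord i) (ltn_ord j))).
  move=> a b /(congr1 val) /= h; apply: val_inj; exact: (Dd_inj hn (ltn_ord i) (ltn_ord a) (ltn_ord b) h).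
by rewrite [RHS](reindex_inj hinj).
Qed.

Lemma sum_re2 (i : 'I_N) : \sum_(j < N) g (Dd n j i) = \sum_(d < N) g d.
Proof.
have hinj : injective (fun j : 'I_N => Ordinal (Dd_lt hn (ltn_ord j) (ltn_ord i))).
  move=> a b /(congr1 val) /= h; apply: val_inj; exact: (Dd_inj2 hn (ltn_ord i) (ltn_ord a) (ltn_ord b) h).
by rewrite [RHS](reindex_inj hinj).
Qed.

Lemma kf_g : kirchhoff R (mobius_adj n) = (N%:R * (N%:R * (2 * g 0) - 2 * \sum_(d < N) g d)) / 2.
Proof.
rewrite /kirchhoff.
under eq_bigr => i _ do under eq_bigr => j _ do rewrite res_eq.
rewrite (sum_upper (S := fun i j => (g 0 - g (Dd n j i)) - (g (Dd n i j) - g 0))); last first.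
- by move=> i; rewrite Dd_nn; ring.
- by move=> i j /=; ring.
congr (_ / 2).
rewrite (eq_bigr (fun i : 'I_N => \sum_(j < N) (2 * g 0 - g (Dd n j i) - g (Dd n i j)))); last first.
  by move=> i _; apply: eq_bigr => j _; ring.
under eq_bigr => i _ do rewrite !sumrB sum_re1 sum_re2 sumr_const card_ord.
rewrite sumr_const card_ord; ring.
Qed.

End Main.

Unset Implicit Arguments.

Theorem theorem3p3 (R : rcfType) (n : nat) (hn : (3 <= n)%N) :
  let p : R := 2 + Num.sqrt 3 in
  let q : R := 2 - Num.sqrt 3 in
  kirchhoff R (mobius_adj n) =
    ((n%:R ^+ 3 - n%:R) / 6%:R)
    + (n%:R ^+ 2 / Num.sqrt 3) * ((p ^+ n - q ^+ n) / (p ^+ n + q ^+ n + 2)).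
Proof.
move=> p q.
rewrite (kf_g R hn) (sum_g R hn) (g_lo R (d:=0%N)); last lia.
rewrite hh0 /kk /Cc subn0 expr0.
have hs := s_gt0 R; have hs2 := s2 R; have hq := q_gt0 R.
have hPQ : p ^+ n * q ^+ n = 1.
  rewrite -exprMn_comm; last by rewrite /GRing.comm /p /q; ring.
  by rewrite (_ : p * q = 1) ?expr1n // /p /q; rewrite (_ : _ * _ = 4 - Num.sqrt 3 * Num.sqrt 3); [rewrite hs2; ring | ring].
rewrite -/q.
set Q := q ^+ n in hPQ *; set P := p ^+ n in hPQ *.
have hQ : 0 < Q by rewrite /Q exprn_gt0.
have hP : P = Q^-1.
  by rewrite -[P]mulr1 -(divff (lt0r_neq0 hQ)) mulrA hPQ mul1r.
rewrite hP natrM.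
field.
have hQQ := mulr_gt0 hQ hQ.
apply/and4P; split; apply/lt0r_neq0 => //; lra.
Qed.
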